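(* Let $\mathcal I,\mathcal X$ be non-empty sets and let $(\mathcal I,\langle\cdot\rangle_x)_{x\in\mathcal X}$ be a family of partial magmas satisfying the bi-injectivity property: for all $a,a',b\in\mathcal I$ and $x,x'\in\mathcal X$, $\langle a'b\rangle_{x'}=\langle ab\rangle_x$ implies $x'=x$ and $a'=a$. Then every map $S:\mathcal X\times\mathcal X\to\mathcal X\times\mathcal X$, $S(x,y)=(u,v)$, satisfying the associativity condition $\langle a\langle bc\rangle_y\rangle_x=\langle\langle ab\rangle_u c\rangle_v$ for all $x,y\in\mathcal X$ (with $(u,v)=S(x,y)$) and all $a,b,c\in\mathcal I$, is a pentagon map.
   Context: A partial magma $(\mathcal I,\langle\cdot\rangle)$ is a non-empty set $\mathcal I$ with a binary operation $\langle\cdot\rangle:D\to\mathcal I$, $D\subseteq\mathcal I\times\mathcal I$, written $(a,b)\mapsto\langle ab\rangle$. For a set $Y$ and $S:Y\times Y\to Y\times Y$, define on $Y^3$: $S_{12}=S\times\mathrm{id}_Y$, $S_{23}=\mathrm{id}_Y\times S$, $S_{13}(y_1,y_2,y_3)=(p,y_2,q)$ with $(p,q)=S(y_1,y_3)$. $S$ is a pentagon map if $S_{12}\circ S_{13}\circ S_{23}=S_{23}\circ S_{12}$ (rightmost applied first). *)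

(* Defs.v *)
(* A family of partial magmas (I, <.>_x)_{x in X} is represented by
   op : X -> I -> I -> option I, where op x a b = Some c means (a,b) is in the
   domain D_x and <ab>_x = c, and op x a b = None means (a,b) is not in D_x. *)

Definition pmul {I X : Type} (op : X -> I -> I -> option I) (x : X)
  (a b : option I) : option I :=
  match a, b with
  | Some a', Some b' => op x a' b'
  | _, _ => None
  end.

Definition defeq {I : Type} (e1 e2 : option I) : Prop :=
  exists r, e1 = Some r /\ e2 = Some r.

Definition S12 {Y : Type} (S : Y * Y -> Y * Y) (t : Y * Y * Y) : Y * Y * Y :=
  let '(y1, y2, y3) := t in let '(p, q) := S (y1, y2) in (p, q, y3).

Definition S23 {Y : Type} (S : Y * Y -> Y * Y) (t : Y * Y * Y) : Y * Y * Y :=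
  let '(y1, y2, y3) := t in let '(p, q) := S (y2, y3) in (y1, p, q).

Definition S13 {Y : Type} (S : Y * Y -> Y * Y) (t : Y * Y * Y) : Y * Y * Y :=
  let '(y1, y2, y3) := t in let '(p, q) := S (y1, y3) in (p, y2, q).

Definition pentagon {Y : Type} (S : Y * Y -> Y * Y) : Prop :=
  forall t : Y * Y * Y, S12 S (S13 S (S23 S t)) = S23 S (S12 S t).

(* Main.v *)
Require Import Defs.

Theorem mainTheorem2 (I X : Type) (hI : inhabited I) (hX : inhabited X)
  (op : X -> I -> I -> option I)
  (hbi : forall (a a' b : I) (x x' : X),
      defeq (op x' a' b) (op x a b) -> x' = x /\ a' = a)
  (S : X * X -> X * X)
  (hassoc : forall (x y : X) (a b c : I),
      defeq (pmul op x (Some a) (op y b c))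
            (pmul op (snd (S (x, y))) (op (fst (S (x, y))) a b) (Some c))) :
  pentagon S.
Proof.
  assert (H : forall x y a b c u v, S (x, y) = (u, v) ->
    exists bc ab r, op y b c = Some bc /\ op u a b = Some ab /\
      op x a bc = Some r /\ op v ab c = Some r).
  { intros x y a b c u v E. destruct (hassoc x y a b c) as [r [H1 H2]].
    rewrite E in H2. simpl in *.
    destruct (op y b c) as [bc|]; [|discriminate].
    destruct (op u a b) as [ab|]; [|discriminate].
    exists bc, ab, r. auto. }
  destruct hI as [a]. intros [[x y] z].
  unfold S12, S23, S13.
  destruct (S (y, z)) as [u1 v1] eqn:E1.
  destruct (S (x, v1)) as [u2 v2] eqn:E2.
  destruct (S (u2, u1)) as [u3 v3] eqn:E3.
  destruct (S (x, y)) as [p q] eqn:E4.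
  destruct (S (q, z)) as [r s] eqn:E5.
  destruct (H y z a a a u1 v1 E1) as [cd [bc [r1 [A1 [A2 [A3 A4]]]]]].
  destruct (H x v1 a bc a u2 v2 E2) as [cd' [abc [r2 [B1 [B2 [B3 B4]]]]]].
  destruct (H u2 u1 a a a u3 v3 E3) as [bc' [ab [r3 [C1 [C2 [C3 C4]]]]]].
  destruct (H x y a a cd p q E4) as [r1' [ab' [r2' [D1 [D2 [D3 D4]]]]]].
  destruct (H q z ab' a a r s E5) as [cd'' [w [r4 [F1 [F2 [F3 F4]]]]]].
  assert (cd'' = cd) by congruence. subst cd''.
  assert (r1' = r1) by congruence. subst r1'.
  assert (cd' = r1) by congruence. subst cd'.
  assert (r2' = r2) by congruence. subst r2'.
  assert (r4 = r2) by congruence. subst r4.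
  assert (bc' = bc) by congruence. subst bc'.
  assert (r3 = abc) by congruence. subst r3.
  destruct (hbi w abc a s v2) as [G1 G2]. { exists r2. auto. }
  subst. 
  destruct (hbi ab' ab a r v3) as [G3 G4]. { exists w. auto. }
  subst.
  destruct (hbi a a a p u3) as [G5 _]. { exists ab'. auto. }
  subst. reflexivity.
Qed.
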